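(* There exists an invertible $23\times23$ binary matrix such that the corresponding linear kernel has partial distance sequence $(1,2,2,2,2,2,4,4,4,4,4,4,8,8,8,8,8,8,8,12,12,12,16)$. Consequently $E_{23}\ge\frac1{23}\sum_{i=0}^{22}\log_{23}D_{min}^{(i)}\approx0.50705$.
   Context: A kernel of dimension $\ell$ is a bijection $g:\{0,1\}^\ell\to\{0,1\}^\ell$; a linear kernel is $g({\bf u})={\bf u}G$ over $\mathbb{F}_2$ for an invertible $\ell\times\ell$ binary matrix $G$. ${\bf a}\bullet{\bf b}$ denotes concatenation, $d_H$ Hamming distance. Partial distances: $D_{min}^{(i)}=\min\{d_H(g({\bf w}\bullet 0\bullet{\bf u}),g({\bf w}\bullet 1\bullet {\bf v})) : {\bf w}\in\{0,1\}^i,\ {\bf u},{\bf v}\in\{0,1\}^{\ell-i-1}\}$, $i=0,\dots,\ell-1$; exponent $E(g)=\frac1\ell\sum_{i}\log_\ell D_{min}^{(i)}$; $E_\ell=\max_g E(g)$ over all kernels of dimension $\ell$. *)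

(* Defs.v *)
From HB Require Import structures.
From mathcomp Require Import all_boot all_order all_algebra.
From Stdlib Require Import Reals.

Set Implicit Arguments.
Unset Strict Implicit.
Unset Printing Implicit Defensive.

Definition word (l : nat) := 'rV['F_2]_l.

Definition lin_kernel (l : nat) (G : 'M['F_2]_l) : word l -> word l :=
  fun u => mulmx u G.

Definition hamming (l : nat) (x y : word l) : nat :=
  #|[set j : 'I_l | x ord0 j != y ord0 j]|.

(* (x, y) = (w.0.u, w.1.v) for some w of length i and u, v of length l-i-1:
   x and y agree on the first i coordinates, x_i = 0 and y_i = 1. *)
Definition partial_pair (l : nat) (i : 'I_l) (p : word l * word l) : bool :=
  [forall j : 'I_l, (j < i)%N ==> (p.1 ord0 j == p.2 ord0 j)] &&
  (p.1 ord0 i == (@GRing.zero 'F_2)) && (p.2 ord0 i == (@GRing.one 'F_2)).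

(* D_min^(i)(g): minimum of d_H(g x, g y) over such pairs.  The neutral
   element l is harmless since every Hamming distance is <= l and the
   index set is nonempty for i < l. *)
Definition partial_dist (l : nat) (g : word l -> word l) (i : 'I_l) : nat :=
  \big[minn/l]_(p : word l * word l | partial_pair i p) hamming (g p.1) (g p.2).

Definition logb (l d : nat) : R := Rdiv (ln (INR d)) (ln (INR l)).

Definition kernel_exponent (l : nat) (g : word l -> word l) : R :=
  Rmult (Rinv (INR l)) (\big[Rplus/R0]_(i < l) logb l (partial_dist g i)).

(* E_l = max of E(g) over all kernels, i.e. all bijections of {0,1}^l
   (on a finite type, injective = bijective). *)
Definition E_max (l : nat) : R :=
  \big[Rmax/R0]_(g : {ffun word l -> word l} | injectiveb g) kernel_exponent g.

Definition pd_seq23 : seq nat :=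
  [:: 1; 2; 2; 2; 2; 2; 4; 4; 4; 4; 4; 4; 8; 8; 8; 8; 8; 8; 8; 12; 12; 12; 16]%N.

(* Main.v *)
Require Import Defs.
From HB Require Import structures.
From mathcomp Require Import all_boot all_order all_algebra.
From Stdlib Require Import Reals.

Set Implicit Arguments.
Unset Strict Implicit.
Unset Printing Implicit Defensive.

Definition rowsL : seq (seq bool) := [::
  [:: true; false; false; false; false; false; false; false; false; false; false; false; false; false; false; false; false; false; false; false; false; false; false];
  [:: true; true; false; false; false; false; false; false; false; false; false; false; false; false; false; false; false; false; false; false; false; false; false];
  [:: true; false; true; false; false; false; false; false; false; false; false; false; false; false; false; false; false; false; false; false; false; false; false];
  [:: true; false; false; true; false; false; false; false; false; false; false; false; false; false; false; false; false; false; false; false; false; false; false];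
  [:: true; false; false; false; true; false; false; false; false; false; false; false; false; false; false; false; false; false; false; false; false; false; false];
  [:: false; false; false; true; false; true; false; false; false; false; false; false; false; false; false; false; false; false; false; false; false; false; false];
  [:: true; true; false; false; false; true; true; false; false; false; false; false; false; false; false; false; false; false; false; false; false; false; false];
  [:: false; false; false; true; true; true; false; true; false; false; false; false; false; false; false; false; false; false; false; false; false; false; false];
  [:: true; true; true; true; false; true; true; true; true; false; false; false; false; false; false; false; false; false; false; false; false; false; false];
  [:: true; false; false; true; true; false; false; true; true; true; false; false; false; false; false; false; false; false; false; false; false; false; false];
  [:: true; false; true; true; true; true; true; true; true; true; true; false; false; false; false; false; false; false; false; false; false; false; false];
  [:: false; true; true; true; false; false; false; false; false; true; true; true; false; false; false; false; false; false; false; false; false; false; false];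
  [:: true; true; true; false; false; false; false; false; true; true; true; true; true; false; false; false; false; false; false; false; false; false; false];
  [:: true; true; true; true; true; false; false; true; true; false; false; false; false; true; false; false; false; false; false; false; false; false; false];
  [:: false; true; true; true; false; true; true; true; true; true; false; true; true; true; true; false; false; false; false; false; false; false; false];
  [:: true; true; false; true; true; true; true; true; true; false; true; true; true; false; false; true; false; false; false; false; false; false; false];
  [:: false; false; true; false; false; false; true; true; false; true; true; true; false; false; true; false; true; false; false; false; false; false; false];
  [:: true; false; true; false; true; false; true; true; true; false; true; true; true; true; true; false; false; true; false; false; false; false; false];
  [:: false; true; false; true; true; true; true; true; true; false; false; false; false; true; true; true; true; false; true; false; false; false; false];
  [:: true; false; true; true; true; true; false; true; true; false; false; true; false; false; false; true; true; false; true; true; false; false; false];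
  [:: true; false; true; false; false; false; true; false; true; true; false; true; true; true; true; true; true; false; false; false; true; false; false];
  [:: false; false; false; true; true; false; false; false; true; false; true; true; true; true; true; false; true; true; false; true; false; true; false];
  [:: true; true; true; false; true; true; false; false; true; true; true; true; true; true; false; false; false; false; true; true; true; true; true]].

Definition cwL : seq (seq bool) := [::
  [:: true; false; false; false; false; false; false; false; false; false; false; false; false; false; false; false; false; false; false; false; false; false; false];
  [:: false; true; false; false; false; false; false; false; false; false; false; false; false; false; false; false; false; false; false; false; false; false; false];
  [:: false; false; true; false; false; false; false; false; false; false; false; false; false; false; false; false; false; false; false; false; false; false; false];
  [:: false; false; false; true; false; false; false; false; false; false; false; false; false; false; false; false; false; false; false; false; false; false; false];
  [:: false; false; false; false; true; false; false; false; false; false; false; false; false; false; false; false; false; false; false; false; false; false; false];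
  [:: false; false; false; false; false; true; false; false; false; false; false; false; false; false; false; false; false; false; false; false; false; false; false];
  [:: false; false; false; false; false; false; true; false; false; false; false; false; false; false; false; false; false; false; false; false; false; false; false];
  [:: false; false; false; false; false; false; false; true; false; false; false; false; false; false; false; false; false; false; false; false; false; false; false];
  [:: false; false; false; false; false; false; false; false; true; false; true; false; false; false; false; false; false; false; false; false; false; false; false];
  [:: false; false; false; false; false; false; false; false; false; true; true; false; false; false; false; false; false; false; false; false; false; false; false];
  [:: false; false; false; false; false; false; false; false; false; false; true; true; false; false; false; true; false; false; false; false; false; false; false];
  [:: false; false; false; false; false; false; false; false; false; false; false; true; true; false; false; false; false; false; false; false; false; false; false];
  [:: false; false; false; false; false; false; false; false; false; false; false; false; true; false; false; false; false; false; false; false; false; false; false];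
  [:: false; false; false; false; false; false; false; false; false; false; false; false; false; true; false; false; false; false; false; false; false; false; false];
  [:: false; false; false; false; false; false; false; false; false; false; false; false; false; false; true; true; false; false; false; false; false; false; false];
  [:: false; false; false; false; false; false; false; false; false; false; false; false; false; false; false; true; false; true; false; false; false; false; false];
  [:: false; false; false; false; false; false; false; false; false; false; false; false; false; false; false; false; true; false; false; false; false; false; false];
  [:: false; false; false; false; false; false; false; false; false; false; false; false; false; false; false; false; false; true; true; true; false; false; false];
  [:: false; false; false; false; false; false; false; false; false; false; false; false; false; false; false; false; false; false; true; true; false; false; false];
  [:: false; false; false; false; false; false; false; false; false; false; false; false; false; false; false; false; false; false; false; true; false; false; false];
  [:: false; false; false; false; false; false; false; false; false; false; false; false; false; false; false; false; false; false; false; false; true; false; false];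
  [:: false; false; false; false; false; false; false; false; false; false; false; false; false; false; false; false; false; false; false; false; false; true; false];
  [:: false; false; false; false; false; false; false; false; false; false; false; false; false; false; false; false; false; false; false; false; false; false; true]].
Definition idb (b : bool) : bool := b.
Definition xorv (v r : seq bool) : seq bool :=
  mkseq (fun j => nth false v j (+) nth false r j) 23.
Definition andv (v r : seq bool) : seq bool :=
  mkseq (fun j => nth false v j && nth false r j) 23.
Arguments xorv : simpl never.
Arguments andv : simpl never.
Definition rowk k := nth [::] rowsL k.
Definition Gb k j := nth false (rowk k) j.
Definition mask (ks : seq nat) : seq bool :=
  mkseq (fun j => all (fun k => ~~ Gb k j) ks) 23.
Arguments mask : simpl never.
Fixpoint mkps (ks : seq nat) : seq (nat * seq bool) :=
  match ks with [::] => [::] | k :: ks' => (k, mask ks) :: mkps ks' end.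
Fixpoint chk (v : seq bool) (ps : seq (nat * seq bool)) (t : nat) : bool :=
  match ps with
  | [::] => t <= count idb v
  | (k, m) :: ps' => if t <= count idb (andv v m) then true else
                     if chk v ps' t then chk (xorv v (rowk k)) ps' t else false
  end.
Definition step (cb : nat -> bool) (acc : seq bool) (k : nat) :=
  if cb k then xorv acc (rowk k) else acc.
Definition ksi (i : nat) := rev (iota i.+1 (22 - i)).

Lemma allchk : all (fun i => chk (rowk i) (mkps (ksi i)) (nth 0 pd_seq23 i)) (iota 0 23).
Proof. by vm_compute. Qed.

Lemma allwit : all (fun i =>
   [&& count idb (foldl (step (fun k => nth false (nth [::] cwL i) k)) (rowk i) (ksi i)) == nth 0 pd_seq23 i,
    size (nth [::] cwL i) == 23,
    all (fun k => ~~ nth false (nth [::] cwL i) k) (iota 0 i) &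
    nth false (nth [::] cwL i) i]) (iota 0 23).
Proof. by vm_compute. Qed.

Lemma rows_ok : all (fun k => (size (rowk k) == 23) && Gb k k && all (fun j => ~~ Gb k j) (iota k.+1 (22 - k))) (iota 0 23).
Proof. by vm_compute. Qed.

Lemma nth_xorv v r j : j < 23 -> nth false (xorv v r) j = nth false v j (+) nth false r j.
Proof. by move=> hj; rewrite nth_mkseq. Qed.

Lemma nth_fold cb v ks j : j < 23 ->
  nth false (foldl (step cb) v ks) j = nth false v j (+) \big[addb/false]_(k <- ks) (cb k && Gb k j).
Proof.
move=> hj; elim: ks v => [|k ks IH] v /=; first by rewrite big_nil addbF.
rewrite IH big_cons addbA; congr (_ (+) _).
rewrite /step; case: (cb k) => /=; last by rewrite addbF.
by rewrite nth_xorv.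
Qed.

Lemma count_imp (a b : seq bool) : (forall j, nth false a j -> nth false b j) -> count idb a <= count idb b.
Proof.
elim: a b => [|x a IH] b H //=.
case: b H => [|y b] H.
  have Hn : forall j, ~~ nth false (x :: a) j by move=> j; apply/negP => /H; rewrite nth_nil.
  have Ha : count idb a <= count idb [::].
    by apply: IH => j hj; have := Hn j.+1; rewrite /= hj.
  move: Ha; rewrite /= leqn0 => /eqP ->; have := Hn 0; rewrite /= /idb => /negbTE ->; done.
rewrite /= leq_add //; first by have := H 0; rewrite /idb /=; case: x {H} => // ->.
by apply: IH => j hj; apply: (H j.+1).
Qed.

Lemma chk_cons v k ks t : chk v (mkps (k :: ks)) t =
  if t <= count idb (andv v (mask (k :: ks))) then true else
  if chk v (mkps ks) t then chk (xorv v (rowk k)) (mkps ks) t else false.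
Proof. by []. Qed.

Lemma chk_sound t ks v cb : chk v (mkps ks) t -> t <= count idb (foldl (step cb) v ks).
Proof.
elim: ks v => [|k ks IH] v; first by [].
rewrite chk_cons.
case: ifP => [H _ | _]; last case: ifP => [H1 H2|]; last done.
  apply: (leq_trans H); apply: count_imp => j.
  case: (ltnP j 23) => hj; last by rewrite nth_default // size_mkseq.
  rewrite /andv nth_mkseq // => /andP [vj mj].
  rewrite nth_fold // big_cons vj.
  rewrite /mask nth_mkseq //= in mj; case/andP: mj => /negbTE -> mj.
  rewrite andbF /= big_seq big1 // => k' hk'.
  by move/allP: mj => /(_ k' hk') /negbTE ->; rewrite andbF.
rewrite (_ : foldl (step cb) v (k :: ks) = foldl (step cb) (step cb v k) ks) //.
rewrite /step; case: (cb k); [exact: IH | exact: IH].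
Qed.

Import GRing.Theory.
Local Open Scope ring_scope.

Definition b2F (b : bool) : 'F_2 := (b : nat)%:R.
Definition Gm : 'M['F_2]_23 := \matrix_(k, j) b2F (Gb k j).

Lemma F2E (x : 'F_2) : x = b2F (x == 1).
Proof.
case: x => [[|[|n]] Hn]; first (by apply/val_inj); first (by apply/val_inj).
exfalso; move: Hn; vm_compute; discriminate.
Qed.

Lemma b2F_add a b : b2F (a (+) b) = b2F a + b2F b.
Proof. by case: a; case: b; apply/val_inj; vm_compute. Qed.

Lemma b2F_mul a b : b2F (a && b) = b2F a * b2F b.
Proof. by case: a; case: b; apply/val_inj; vm_compute. Qed.

Lemma b2F_eq0 b : (b2F b == 0) = ~~ b.
Proof. by case: b; vm_compute. Qed.

Lemma mulG_neq0 (c : 'rV['F_2]_23) (j : 'I_23) :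
  ((c *m Gm) 0 j != 0) = \big[addb/false]_(k < 23) ((c 0 k == 1) && Gb k j).
Proof.
rewrite mxE (eq_bigr (fun k : 'I_23 => b2F ((c 0 k == 1) && Gb k j))); last first.
  by move=> k _; rewrite b2F_mul mxE -F2E.
by rewrite -(big_morph b2F b2F_add (erefl : b2F false = 0)) b2F_eq0 negbK.
Qed.

Definition cbf (c : 'rV['F_2]_23) (n : nat) : bool :=
  if (n < 23)%nat then c ord0 (inord n) == 1 else false.

Lemma split_big (c : 'rV['F_2]_23) (i j : 'I_23) :
  (forall k : 'I_23, (k < i)%nat -> c ord0 k = 0) -> c ord0 i = 1 ->
  \big[addb/false]_(k < 23) ((c ord0 k == 1) && Gb k j) =
  Gb i j (+) \big[addb/false]_(k <- ksi i) (cbf c k && Gb k j).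
Proof.
move=> Hlt Hi.
rewrite (eq_bigr (fun k : 'I_23 => cbf c k && Gb k j)); last first.
  by move=> k _; rewrite /cbf ltn_ord inord_val.
rewrite -(big_mkord xpredT (fun k => cbf c k && Gb k j)) /index_iota subn0.
have H23 : 23%nat = (i + (22 - i).+1)%nat by rewrite addnS subnKC // -ltnS.
rewrite {1}H23 iotaD add0n /= big_cat big_cons /ksi big_rev.
rewrite big1_seq ?addFb; last first.
  move=> k /andP [_]; rewrite mem_iota add0n => /andP [_ hk].
  have hk23 : (k < 23)%nat by apply: ltn_trans hk (ltn_ord i).
  rewrite /cbf hk23 Hlt ?inordK //.
have -> : cbf c i = true by rewrite /cbf ltn_ord inord_val Hi eqxx.
by [].
Qed.

Lemma size_fold cb v ks : size v = 23%nat -> size (foldl (step cb) v ks) = 23%nat.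
Proof.
elim: ks v => //= k ks IH v sv; apply: IH; rewrite /step; case: (cb k) => //.
Qed.

Lemma card_nth (w : seq bool) : size w = 23%nat ->
  #|[set j : 'I_23 | nth false w j]| = count idb w.
Proof.
move=> sw.
rewrite -sum1dep_card -(big_mkord (fun j => nth false w j) (fun _ => 1%nat)) sum1_count.
rewrite /index_iota subn0 -{2}(mkseq_nth false w) sw /mkseq count_map.
by apply: eq_count.
Qed.

Lemma rowk_size (i : 'I_23) : size (rowk i) = 23%nat.
Proof.
have := allP rows_ok i; rewrite mem_iota ltn_ord => /(_ isT) /andP [/andP [/eqP -> _] _].
done.
Qed.

Lemma ham_eq (i : 'I_23) (x y : word 23) : partial_pair i (x, y) ->
  hamming (lin_kernel Gm x) (lin_kernel Gm y) =
  count idb (foldl (step (cbf (y - x))) (rowk i) (ksi i)).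
Proof.
case/andP => /andP [/forallP Hpre /eqP Hx] /eqP Hy.
rewrite /hamming /lin_kernel -card_nth; last by apply: size_fold; apply: rowk_size.
apply: eq_card => j; rewrite !inE.
rewrite eq_sym -subr_eq0.
have -> : (y *m Gm) ord0 j - (x *m Gm) ord0 j = ((y - x) *m Gm) ord0 j.
  by rewrite mulmxBl !mxE.
rewrite mulG_neq0 (split_big (i:=i)); first by rewrite nth_fold.
  move=> k hk; rewrite !mxE; have := Hpre k; rewrite hk /= => /eqP ->.
  by rewrite subrr.
by rewrite !mxE /= Hx Hy subr0.
Qed.

Lemma bigmin_seq_le (T : eqType) (r : seq T) (P : pred T) (F : T -> nat) idx x :
  x \in r -> P x -> (\big[minn/idx]_(p <- r | P p) F p <= F x)%nat.
Proof.
elim: r => [|a r IH] //; rewrite inE big_cons => /orP [/eqP -> | xr] Px.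
  by rewrite Px geq_minl.
case: (P a); last exact: IH xr Px.
by rewrite geq_min IH ?orbT.
Qed.

Lemma bigRmax_ge (T : eqType) (r : seq T) (P : pred T) (F : T -> R) x :
  x \in r -> P x -> Rle (F x) (\big[Rmax/R0]_(p <- r | P p) F p).
Proof.
elim: r => [|a r IH] //; rewrite inE big_cons => /orP [/eqP -> | xr] Px.
  by rewrite Px; apply: Rmax_l.
case: (P a); last exact: IH xr Px.
apply: Rle_trans (IH xr Px) _; apply: Rmax_r.
Qed.

Lemma pd_small : all (fun i => (nth 0 pd_seq23 i <= 23)%nat) (iota 0 23).
Proof. by vm_compute. Qed.

Lemma b2F_eq1 b : (b2F b == 1) = b.
Proof. by case: b; vm_compute. Qed.

Lemma foldl_ext cb cb' v ks : cb =1 cb' ->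
  foldl (step cb) v ks = foldl (step cb') v ks.
Proof. by move=> E; elim: ks v => //= k ks IH v; rewrite IH /step E. Qed.

Lemma pd_G (i : 'I_23) : partial_dist (lin_kernel Gm) i = nth 0%nat pd_seq23 i.
Proof.
have iin : (val i \in iota 0 23) by rewrite mem_iota ltn_ord.
have := allP allwit _ iin => /and4P [/eqP Hcnt /eqP Hsz Hpre Hi].
set cw := nth [::] cwL i in Hcnt Hsz Hpre Hi.
apply/eqP; rewrite eqn_leq; apply/andP; split.
  pose y : word 23 := \row_k b2F (nth false cw k).
  have Hp : partial_pair i (0, y).
    apply/andP; split; first (apply/andP; split).
    - apply/forallP => j; apply/implyP => hj; rewrite !mxE.
      have : (val j \in iota 0 i) by rewrite mem_iota.
      by move/(allP Hpre) => /negbTE ->.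
    - by rewrite mxE.
    - by rewrite mxE Hi.
  apply: leq_trans (bigmin_seq_le _ _ (mem_index_enum (0, y)) Hp) _.
  rewrite /= (ham_eq Hp) -Hcnt (@foldl_ext _ (fun k => nth false cw k)) //.
  move=> k; rewrite /cbf; case: ltnP => hk.
    by rewrite !mxE subr0 inordK // b2F_eq1.
  by rewrite nth_default // Hsz.
have Ht : (nth 0 pd_seq23 i <= 23)%nat by apply: (allP pd_small).
rewrite /partial_dist; apply: (big_ind (fun n => nth 0%nat pd_seq23 i <= n)%nat) => //.
  by move=> a b Ha Hb; rewrite leq_min Ha.
move=> [x y] Hp; rewrite /= (ham_eq Hp); apply: chk_sound.
exact: (allP allchk).
Qed.

Theorem mainTheorem14 :
  exists G : 'M['F_2]_23,
    G \in unitmx /\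
    (forall i : 'I_23, partial_dist (lin_kernel G) i = nth 0%N pd_seq23 i) /\
    Rge (E_max 23)
        (Rmult (Rinv (INR 23))
               (\big[Rplus/R0]_(i < 23) logb 23 (nth 0%N pd_seq23 i))).
Proof.
have unitG : Gm \in unitmx.
  rewrite unitmxE det_trig.
    rewrite big1 ?unitr1 // => i _; rewrite mxE.
    have := allP rows_ok i; rewrite mem_iota ltn_ord => /(_ isT) /andP [/andP [_ ->] _].
    by vm_compute.
  apply/is_trig_mxP => i j hij; rewrite mxE.
  have := allP rows_ok i; rewrite mem_iota ltn_ord => /(_ isT) /andP [_ /allP H].
  have jin : (val j \in iota i.+1 (22 - i)).
    rewrite mem_iota hij /= addSn subnKC ?ltn_ord // -ltnS ltn_ord //.
  by rewrite (negbTE (H _ jin)); vm_compute.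
exists Gm; split; first exact: unitG.
split; first exact: pd_G.
apply: Rle_ge.
pose g0 : {ffun word 23 -> word 23} := [ffun u => lin_kernel Gm u].
have inj0 : injectiveb g0.
  apply/injectiveP => u v; rewrite !ffunE /lin_kernel => H.
  by have := congr1 (mulmx^~ (invmx Gm)) H; rewrite !mulmxK.
have -> : Rmult (Rinv (INR 23)) (\big[Rplus/R0]_(i < 23) logb 23 (nth 0%N pd_seq23 i))
          = kernel_exponent g0.
  rewrite /kernel_exponent; congr (Rmult _ _); apply: eq_bigr => i _.
  rewrite -pd_G; congr (logb _ _).
  by rewrite /partial_dist; apply: eq_bigr => p _; rewrite !ffunE.
rewrite /E_max; exact: bigRmax_ge (mem_index_enum g0) inj0.
Qed.
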